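(* There is an absolute constant $c>0$ such that for all $k\ge 2$, $\gamma\in(0,1/4]$ and $\varepsilon\in(0,1]$: if each of $n$ users reports its sample via $\varepsilon$-Hadamard Response and the curator applies any (possibly randomized) decision rule to the $n$ reports so that the whole procedure outputs ``uniform'' with probability at least $2/3$ when $p=u$ and ``not uniform'' with probability at least $2/3$ whenever $d_{TV}(p,u)>\gamma$, then $n\ge c\,k^{3/2}/(\gamma^2\varepsilon^2)$.
   Context: Users hold i.i.d. samples from an unknown $p\in\Delta([k])$; $u$ is the uniform distribution on $[k]$; $d_{TV}(p,q)=\frac12\|p-q\|_1$. Hadamard Response (HR): let $K=2^{\lceil\log_2(k+1)\rceil}$ and let $H_K\in\{-1,1\}^{K\times K}$ be the Sylvester Hadamard matrix ($H_1=[1]$, $H_{2m}=\begin{bmatrix}H_m&H_m\\H_m&-H_m\end{bmatrix}$). Fix an injection $\phi:[k]\to\{2,\dots,K\}$ and set $C_x=\{z\in[K]:(H_K)_{\phi(x),z}=1\}$. On input $x\in[k]$, HR outputs $z\in[K]$ with probability $\frac{2}{K}\cdot\frac{e^\varepsilon}{e^\varepsilon+1}$ if $z\in C_x$ and $\frac{2}{K}\cdot\frac{1}{e^\varepsilon+1}$ otherwise, independently across users. *)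

(* Defs.v *)
From Stdlib Require Import Reals Lra Lia List Arith.
Open Scope R_scope.

Fixpoint sumR (n : nat) (f : nat -> R) : R :=
  match n with O => 0 | S m => sumR m f + f m end.

Fixpoint prodR (q : nat -> R) (zs : list nat) : R :=
  match zs with nil => 1 | z :: t => q z * prodR q t end.

(* sum of F over all lists of length n with entries in {0,...,K-1} *)
Fixpoint seqsum (n K : nat) (F : list nat -> R) : R :=
  match n with
  | O => F nil
  | S m => sumR K (fun z => seqsum m K (fun zs => F (z :: zs)))
  end.

(* Sylvester Hadamard matrix H_{2^m}, 0-based indices i,j < 2^m:
   H_1 = [1], H_{2h} = [[H_h, H_h],[H_h, -H_h]]. *)
Fixpoint hadamard (m : nat) (i j : nat) : R :=
  match m with
  | O => 1
  | S m' =>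
      let h := Nat.pow 2 m' in
      if Nat.ltb i h then
        (if Nat.ltb j h then hadamard m' i j else hadamard m' i (j - h))
      else
        (if Nat.ltb j h then hadamard m' (i - h) j else - hadamard m' (i - h) (j - h))
  end.

Definition HR_m (k : nat) : nat := Nat.log2_up (k + 1).
Definition HR_K (k : nat) : nat := Nat.pow 2 (HR_m k).

(* phi : [k] -> {2,...,K} in 1-based indexing, i.e. rows {1,...,K-1} 0-based;
   symbols x in [k] are represented as 0,...,k-1. *)
Definition valid_injection (k : nat) (phi : nat -> nat) : Prop :=
  (forall x, (x < k)%nat -> (1 <= phi x)%nat /\ (phi x < HR_K k)%nat) /\
  (forall x y, (x < k)%nat -> (y < k)%nat -> phi x = phi y -> x = y).

Definition HR_W (k : nat) (eps : R) (phi : nat -> nat) (x z : nat) : R :=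
  if Req_EM_T (hadamard (HR_m k) (phi x) z) 1
  then (2 / INR (HR_K k)) * (exp eps / (exp eps + 1))
  else (2 / INR (HR_K k)) * (1 / (exp eps + 1)).

Definition HR_out (k : nat) (eps : R) (phi : nat -> nat) (p : nat -> R) (z : nat) : R :=
  sumR k (fun x => p x * HR_W k eps phi x z).

Definition is_dist (k : nat) (p : nat -> R) : Prop :=
  (forall x, (x < k)%nat -> 0 <= p x) /\ sumR k p = 1.

Definition unif (k : nat) : nat -> R := fun _ => 1 / INR k.

Definition dTV (k : nat) (p q : nat -> R) : R :=
  (1/2) * sumR k (fun x => Rabs (p x - q x)).

(* Probability that the curator outputs "uniform", where T zs in [0,1] is the
   (randomized) rule's probability of outputting "uniform" on reports zs,
   and the n reports are i.i.d. from HR_out. *)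
Definition accept_prob (n k : nat) (eps : R) (phi : nat -> nat) (p : nat -> R)
  (T : list nat -> R) : R :=
  seqsum n (HR_K k) (fun zs => prodR (HR_out k eps phi p) zs * T zs).

(* Main.v *)
Require Import Defs.
From Stdlib Require Import Reals Lra Lia List Arith.
Open Scope R_scope.

Lemma sumR_ext n f g : (forall i, (i < n)%nat -> f i = g i) -> sumR n f = sumR n g.
Proof. induction n; simpl; intros H; auto. rewrite IHn by (intros; apply H; lia). rewrite H by lia. auto. Qed.

Lemma sumR_plus n f g : sumR n (fun i => f i + g i) = sumR n f + sumR n g.
Proof. induction n; simpl; [lra|]. rewrite IHn; lra. Qed.

Lemma sumR_minus n f g : sumR n (fun i => f i - g i) = sumR n f - sumR n g.
Proof. induction n; simpl; [lra|]. rewrite IHn; lra. Qed.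

Lemma sumR_scal n c f : sumR n (fun i => c * f i) = c * sumR n f.
Proof. induction n; simpl; [lra|]. rewrite IHn; lra. Qed.

Lemma sumR_le n f g : (forall i, (i < n)%nat -> f i <= g i) -> sumR n f <= sumR n g.
Proof. induction n; simpl; intros H; [lra|]. assert (H1 := H n ltac:(lia)).
  assert (sumR n f <= sumR n g) by (apply IHn; intros; apply H; lia). lra. Qed.

Lemma sumR_nonneg n f : (forall i, (i < n)%nat -> 0 <= f i) -> 0 <= sumR n f.
Proof. intros H. replace 0 with (sumR n (fun _ => 0)). apply sumR_le; auto.
  induction n; simpl; auto. rewrite IHn; [lra|]. intros; apply H; lia. Qed.

Lemma sumR_const n c : sumR n (fun _ => c) = INR n * c.
Proof. induction n; simpl sumR; [simpl; lra|]. rewrite IHn, S_INR; lra. Qed.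

Lemma sumR_shift n f : sumR (S n) f = f 0%nat + sumR n (fun i => f (S i)).
Proof. induction n; simpl; [lra|]. simpl in IHn. rewrite IHn. lra. Qed.

Lemma sumR_add a b f : sumR (a + b) f = sumR a f + sumR b (fun i => f (a + i)%nat).
Proof. induction b; simpl. rewrite Nat.add_0_r; lra. rewrite Nat.add_succ_r. simpl. rewrite IHb. lra. Qed.

Lemma sumR_swap n m (F : nat -> nat -> R) :
  sumR n (fun i => sumR m (fun j => F i j)) = sumR m (fun j => sumR n (fun i => F i j)).
Proof. induction n; simpl. rewrite sumR_const; lra.
  rewrite IHn. rewrite <- sumR_plus. auto. Qed.

Lemma sumR_mul n m f g : sumR n f * sumR m g = sumR n (fun i => sumR m (fun j => f i * g j)).
Proof. rewrite Rmult_comm, <- sumR_scal. apply sumR_ext; intros. rewrite Rmult_comm, <- sumR_scal.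
  apply sumR_ext; intros; lra. Qed.

Lemma sumR_ge_term n f i : (forall j, (j < n)%nat -> 0 <= f j) -> (i < n)%nat -> f i <= sumR n f.
Proof. induction n; intros H Hi; [lia|]. simpl. destruct (Nat.eq_dec i n).
  subst. assert (0 <= sumR n f) by (apply sumR_nonneg; intros; apply H; lia). lra.
  assert (f i <= sumR n f) by (apply IHn; [intros; apply H|]; lia). assert (0 <= f n) by (apply H; lia). lra. Qed.

Lemma sumR_kron n i (g : nat -> R) : (i < n)%nat ->
  sumR n (fun l => if Nat.eqb i l then g l else 0) = g i.
Proof. induction n; intros Hi; [lia|]. simpl. destruct (Nat.eq_dec i n).
  subst. rewrite Nat.eqb_refl. rewrite (sumR_ext _ _ (fun _ => 0)).
  rewrite sumR_const; lra. intros j Hj. destruct (Nat.eqb_spec n j); [lia|auto].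
  rewrite IHn by lia. destruct (Nat.eqb_spec i n); [lia|lra]. Qed.

Lemma sumR_pairs m g : sumR (2 * m) g = sumR m (fun i => g (2 * i)%nat + g (2 * i + 1)%nat).
Proof. induction m; [simpl; lra|]. replace (2 * S m)%nat with (S (S (2 * m))) by lia.
  cbn [sumR]. rewrite IHm. replace (2 * S m)%nat with (S (S (2 * m))) by lia. replace (2 * m + 1)%nat with (S (2 * m)) by lia. lra. Qed.

Lemma seqsum_ext n K F G : (forall zs, F zs = G zs) -> seqsum n K F = seqsum n K G.
Proof. revert F G; induction n; simpl; intros F G H; auto. apply sumR_ext; intros. apply IHn; auto. Qed.

Lemma seqsum_plus n K F G : seqsum n K (fun zs => F zs + G zs) = seqsum n K F + seqsum n K G.
Proof. revert F G; induction n; simpl; intros; auto. rewrite <- sumR_plus. apply sumR_ext; intros. apply IHn. Qed.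

Lemma seqsum_scal n K c F : seqsum n K (fun zs => c * F zs) = c * seqsum n K F.
Proof. revert F; induction n; simpl; intros; auto. rewrite <- sumR_scal. apply sumR_ext; intros. apply IHn. Qed.

Lemma seqsum_minus n K F G : seqsum n K (fun zs => F zs - G zs) = seqsum n K F - seqsum n K G.
Proof. unfold Rminus. rewrite seqsum_plus. rewrite (seqsum_ext _ _ (fun zs => - G zs) (fun zs => -1 * G zs)) by (intros; lra).
  rewrite seqsum_scal. lra. Qed.

Lemma seqsum_le n K F G : (forall zs, F zs <= G zs) -> seqsum n K F <= seqsum n K G.
Proof. revert F G; induction n; simpl; intros F G H; auto. apply sumR_le; intros. apply IHn; auto. Qed.

Lemma seqsum_const n K c : seqsum n K (fun _ => c) = INR K ^ n * c.
Proof. revert c; induction n; simpl; intros; [lra|]. rewrite (sumR_ext _ _ (fun _ => INR K ^ n * c)).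
  rewrite sumR_const. lra. intros; apply IHn. Qed.

Lemma seqsum_prod n K f : seqsum n K (prodR f) = sumR K f ^ n.
Proof. induction n; simpl; auto. rewrite (sumR_ext _ _ (fun z => f z * sumR K f ^ n)).
  rewrite Rmult_comm, <- sumR_scal. apply sumR_ext; intros; lra.
  intros. rewrite <- IHn. apply seqsum_scal. Qed.

Lemma seqsum_sumR n K m F :
  seqsum n K (fun zs => sumR m (fun i => F i zs)) = sumR m (fun i => seqsum n K (F i)).
Proof. revert F; induction n; simpl; intros; auto.
  rewrite (sumR_ext _ _ (fun z => sumR m (fun i => seqsum n K (fun zs => F i (z :: zs))))).
  apply sumR_swap. intros z _. apply (IHn (fun i zs => F i (z :: zs))). Qed.

Lemma seqsum_swap n K m L (F : list nat -> list nat -> R) :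
  seqsum n K (fun zs => seqsum m L (fun bs => F zs bs)) = seqsum m L (fun bs => seqsum n K (fun zs => F zs bs)).
Proof. revert F; induction n; simpl; intros; auto.
  rewrite (sumR_ext _ _ (fun z => seqsum m L (fun bs => seqsum n K (fun zs => F (z :: zs) bs)))).
  symmetry. apply (seqsum_sumR m L K (fun z bs => seqsum n K (fun zs => F (z :: zs) bs))).
  intros. apply (IHn (fun zs bs => F (i :: zs) bs)). Qed.

Lemma seqsum_mul m L f g : seqsum m L f * seqsum m L g = seqsum m L (fun b => seqsum m L (fun b' => f b * g b')).
Proof. rewrite Rmult_comm, <- seqsum_scal. apply seqsum_ext; intros. rewrite Rmult_comm, <- seqsum_scal.
  apply seqsum_ext; intros; lra. Qed.

Lemma seqsum_nonneg n K F : (forall zs, 0 <= F zs) -> 0 <= seqsum n K F.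
Proof. intros H. replace 0 with (seqsum n K (fun _ => 0)). apply seqsum_le; auto.
  rewrite seqsum_const; lra. Qed.

Lemma prodR_pos f zs : (forall z, 0 < f z) -> 0 < prodR f zs.
Proof. induction zs; simpl; intros; [lra|]. apply Rmult_lt_0_compat; auto. Qed.

Lemma prodR_quot f g h zs : (forall z, 0 < h z) ->
  prodR f zs * prodR g zs / prodR h zs = prodR (fun z => f z * g z / h z) zs.
Proof. induction zs; simpl; intros H; [field|]. rewrite <- IHzs by auto.
  assert (0 < h a) by auto. assert (0 < prodR h zs) by (apply prodR_pos; auto). field; lra. Qed.

Lemma had_pm m i j : hadamard m i j = 1 \/ hadamard m i j = -1.
Proof. revert i j; induction m; simpl; intros; auto.
  destruct (Nat.ltb i (2 ^ m)); destruct (Nat.ltb j (2^m)); auto.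
  destruct (IHm (i - 2^m)%nat (j - 2^m)%nat) as [-> | ->]; lra. Qed.

Lemma ltb_t a b : (a < b)%nat -> Nat.ltb a b = true.
Proof. apply Nat.ltb_lt. Qed.
Lemma ltb_f a b : (b <= a)%nat -> Nat.ltb a b = false.
Proof. apply Nat.ltb_ge. Qed.

Lemma had_row0 m z : (z < 2 ^ m)%nat -> hadamard m 0 z = 1.
Proof. revert z; induction m; simpl; intros z Hz; auto.
  rewrite ltb_t by (pose proof (Nat.pow_nonzero 2 m ltac:(lia)); lia).
  destruct (Nat.ltb_spec z (2^m)). apply IHm; auto. apply IHm. lia. Qed.

Lemma had_orth m i j : (i < 2 ^ m)%nat -> (j < 2 ^ m)%nat ->
  sumR (2 ^ m) (fun z => hadamard m i z * hadamard m j z) = if Nat.eqb i j then INR (2 ^ m) else 0.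
Proof. revert i j; induction m; intros i j Hi Hj.
  simpl in *. replace i with 0%nat by lia. replace j with 0%nat by lia. simpl. lra.
  set (h := (2 ^ m)%nat).
  assert (Hh : (2 ^ S m = h + h)%nat) by (unfold h; simpl; lia).
  rewrite Hh in *. rewrite sumR_add.
  rewrite (sumR_ext h (fun z => hadamard (S m) i z * hadamard (S m) j z)
     (fun z => (if Nat.ltb i h then hadamard m i z else hadamard m (i - h) z) *
               (if Nat.ltb j h then hadamard m j z else hadamard m (j - h) z))).
  2:{ intros z Hz. cbn [hadamard]. fold h. rewrite (ltb_t z h Hz). auto. }
  rewrite (sumR_ext h (fun z => hadamard (S m) i (h + z) * hadamard (S m) j (h + z))
     (fun z => (if Nat.ltb i h then hadamard m i z else - hadamard m (i - h) z) *
               (if Nat.ltb j h then hadamard m j z else - hadamard m (j - h) z))).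
  2:{ intros z Hz. cbn [hadamard]. fold h. rewrite (ltb_f (h+z) h) by lia.
      replace (h + z - h)%nat with z by lia. auto. }
  rewrite plus_INR.
  destruct (Nat.ltb_spec i h); destruct (Nat.ltb_spec j h).
  - rewrite IHm by auto. fold h. destruct (Nat.eqb i j); lra.
  - rewrite (sumR_ext h (fun z => hadamard m i z * - hadamard m (j - h) z) (fun z => -1 * (hadamard m i z * hadamard m (j - h) z))) by (intros; lra).
    rewrite sumR_scal, IHm by lia. fold h. destruct (Nat.eqb_spec i (j - h)); destruct (Nat.eqb_spec i j); try lia; lra.
  - rewrite (sumR_ext h (fun z => - hadamard m (i - h) z * hadamard m j z) (fun z => -1 * (hadamard m (i - h) z * hadamard m j z))) by (intros; lra).
    rewrite sumR_scal, IHm by lia. fold h. destruct (Nat.eqb_spec (i - h) j); destruct (Nat.eqb_spec i j); try lia; lra.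
  - rewrite (sumR_ext h (fun z => - hadamard m (i - h) z * - hadamard m (j - h) z) (fun z => (hadamard m (i - h) z * hadamard m (j - h) z))) by (intros; lra).
    rewrite IHm by lia. fold h. destruct (Nat.eqb_spec (i - h) (j - h)); destruct (Nat.eqb_spec i j); try lia; lra.
Qed.

Lemma had_rowsum m i : (1 <= i)%nat -> (i < 2 ^ m)%nat -> sumR (2 ^ m) (fun z => hadamard m i z) = 0.
Proof. intros H1 H2. rewrite (sumR_ext _ _ (fun z => hadamard m i z * hadamard m 0 z)).
  rewrite had_orth by lia. destruct (Nat.eqb_spec i 0); [lia|auto].
  intros z Hz. rewrite had_row0 by auto. lra. Qed.

Definition beta eps := (exp eps - 1) / (exp eps + 1).
Definition Kr k := INR (HR_K k).
Definition Hd k i z := hadamard (HR_m k) i z.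

Lemma Kr_pos k : 0 < Kr k.
Proof. unfold Kr, HR_K. apply lt_0_INR. pose proof (Nat.pow_nonzero 2 (HR_m k) ltac:(lia)). lia. Qed.

Lemma Hd_pm k i z : Hd k i z = 1 \/ Hd k i z = -1.
Proof. apply had_pm. Qed.

Lemma HR_W_eq k eps phi x z : HR_W k eps phi x z = (1 + beta eps * Hd k (phi x) z) / Kr k.
Proof. unfold HR_W, beta, Kr. pose proof (Kr_pos k) as HK. unfold Kr in HK. pose proof (exp_pos eps).
  fold (Hd k (phi x) z). destruct (Req_EM_T (Hd k (phi x) z) 1) as [E|E].
  rewrite E; field; lra. destruct (Hd_pm k (phi x) z) as [E'|E']; [contradiction|]. rewrite E'. field; lra. Qed.

Lemma W_rowsum k eps phi x : valid_injection k phi -> (x < k)%nat ->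
  sumR (HR_K k) (fun z => HR_W k eps phi x z) = 1.
Proof. intros [Hv _] Hx. destruct (Hv x Hx).
  rewrite (sumR_ext _ _ (fun z => / Kr k + (beta eps / Kr k) * Hd k (phi x) z)).
  rewrite sumR_plus, sumR_scal, sumR_const. unfold Hd, HR_K. rewrite had_rowsum by auto.
  fold (HR_K k). fold (Kr k). pose proof (Kr_pos k). field; lra.
  intros; rewrite HR_W_eq. pose proof (Kr_pos k). field; lra. Qed.

Lemma out_sum k eps phi p : valid_injection k phi ->
  sumR (HR_K k) (HR_out k eps phi p) = sumR k p.
Proof. intros Hv. unfold HR_out. rewrite <- sumR_swap. apply sumR_ext; intros x Hx.
  rewrite sumR_scal, W_rowsum by auto. lra. Qed.

Lemma exp_gt1 eps : 0 < eps -> 1 < exp eps.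
Proof. intros. pose proof (exp_ineq1 eps ltac:(lra)). lra. Qed.

Lemma exp_small eps : 0 < eps -> eps <= 1 -> exp eps <= 1 + 3 * eps.
Proof. intros H1 H2.
  assert (E : exp eps = exp (eps/2) * exp (eps/2)) by (rewrite <- exp_plus; f_equal; lra).
  assert (E2 : exp (eps/2) * exp (- (eps/2)) = 1) by (rewrite <- exp_plus, <- exp_0; f_equal; lra).
  pose proof (exp_ineq1_le (- (eps/2))). pose proof (exp_pos (eps/2)).
  assert (exp (eps/2) <= 1 + eps).
  { assert (exp (eps/2) * (1 - eps/2) <= 1) by nra. nra. }
  rewrite E. nra. Qed.

Lemma beta_bounds eps : 0 < eps -> eps <= 1 ->
  0 < beta eps /\ beta eps <= 3/2 * eps /\ 1 - beta eps >= 2/5.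
Proof. intros. pose proof (exp_gt1 eps H). pose proof (exp_small eps H H0). unfold beta.
  split; [apply Rdiv_lt_0_compat; lra|]. split.
  apply Rmult_le_reg_r with (exp eps + 1); [lra|]. unfold Rdiv. rewrite Rmult_assoc, Rinv_l by lra. nra.
  assert ((exp eps - 1)/(exp eps + 1) <= 3/5). apply Rmult_le_reg_r with (exp eps + 1); [lra|].
  unfold Rdiv. rewrite Rmult_assoc, Rinv_l by lra. nra. lra. Qed.

Lemma qu_lower k eps phi z : (1 <= k)%nat -> 0 < eps -> eps <= 1 ->
  (1 - beta eps) / Kr k <= HR_out k eps phi (unif k) z.
Proof. intros Hk He1 He2. destruct (beta_bounds eps He1 He2) as [B1 [B2 B3]]. pose proof (Kr_pos k).
  assert (0 < INR k) by (apply lt_0_INR; lia).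
  unfold HR_out, unif. replace ((1 - beta eps)/Kr k) with (sumR k (fun _ => 1 / INR k * ((1 - beta eps)/Kr k))).
  apply sumR_le; intros. rewrite HR_W_eq. apply Rmult_le_compat_l. apply Rlt_le, Rdiv_lt_0_compat; lra.
  unfold Rdiv. apply Rmult_le_compat_r. apply Rlt_le, Rinv_0_lt_compat; lra.
  destruct (Hd_pm k (phi i) z) as [-> | ->]; nra.
  rewrite sumR_const. field; lra. Qed.

Definition sg (b : nat) : R := if Nat.eqb b 0 then 1 else -1.
Definition th (bs : list nat) i := sg (nth i bs 0%nat).
Definition sig m bs x :=
  if Nat.ltb x (2 * m) then (if Nat.eqb x (2 * Nat.div2 x) then th bs (Nat.div2 x) else - th bs (Nat.div2 x)) else 0.

Lemma th_pm bs i : th bs i = 1 \/ th bs i = -1.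
Proof. unfold th, sg. destruct (Nat.eqb _ 0); auto. Qed.

Lemma sig_even m bs i : (i < m)%nat -> sig m bs (2 * i) = th bs i.
Proof. intros. unfold sig. rewrite ltb_t by lia. rewrite Nat.div2_double, Nat.eqb_refl. auto. Qed.

Lemma sig_odd m bs i : (i < m)%nat -> sig m bs (2 * i + 1) = - th bs i.
Proof. intros. unfold sig. rewrite ltb_t by lia. replace (2 * i + 1)%nat with (S (2 * i)) by lia.
  rewrite Nat.div2_succ_double. destruct (Nat.eqb_spec (S (2 * i)) (2 * i)); [lia|auto]. Qed.

Lemma sig_out m bs x : (2 * m <= x)%nat -> sig m bs x = 0.
Proof. intros. unfold sig. rewrite ltb_f by lia. auto. Qed.

Lemma sum_split k m r G : k = (2 * m + r)%nat -> (forall x, (2 * m <= x)%nat -> G x = 0) ->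
  sumR k G = sumR m (fun i => G (2 * i)%nat + G (2 * i + 1)%nat).
Proof. intros -> H. rewrite sumR_add, sumR_pairs. rewrite (sumR_ext r _ (fun _ => 0)).
  rewrite sumR_const; lra. intros; apply H; lia. Qed.

Lemma sum_sig k m r bs g : k = (2 * m + r)%nat ->
  sumR k (fun x => sig m bs x * g x) = sumR m (fun i => th bs i * (g (2 * i)%nat - g (2 * i + 1)%nat)).
Proof. intros Hk. rewrite (sum_split k m r) by (auto; intros; rewrite sig_out by auto; lra).
  apply sumR_ext; intros. rewrite sig_even, sig_odd by auto. lra. Qed.

Lemma sig_bound m bs x : -1 <= sig m bs x <= 1.
Proof. unfold sig. destruct (th_pm bs (Nat.div2 x)) as [E|E]; rewrite ?E;
  destruct (Nat.ltb x (2*m)); try destruct (Nat.eqb _ _); lra. Qed.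

Definition pth a k m bs x := (1 + a * sig m bs x) / INR k.

Lemma pth_dist a k m r bs : k = (2 * m + r)%nat -> (1 <= m)%nat -> 0 <= a <= 1 -> is_dist k (pth a k m bs).
Proof. intros Hk Hm Ha. assert (0 < INR k) by (apply lt_0_INR; lia). split.
  - intros x Hx. unfold pth. apply Rmult_le_pos; [|apply Rlt_le, Rinv_0_lt_compat; lra].
    pose proof (sig_bound m bs x). nra.
  - rewrite (sumR_ext _ _ (fun x => / INR k + (a / INR k) * (sig m bs x * 1))).
    rewrite sumR_plus, sumR_scal, sumR_const, (sum_sig k m r) by auto.
    rewrite (sumR_ext m _ (fun _ => 0)) by (intros; lra). rewrite sumR_const. field; lra.
    intros; unfold pth; field; lra. Qed.

Lemma pth_far a gamma k m r bs : k = (2 * m + r)%nat -> (r <= 1)%nat -> (1 <= m)%nat -> a = 4 * gamma -> 0 < gamma ->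
  dTV k (pth a k m bs) (unif k) > gamma.
Proof. intros Hk Hr Hm Ha Hg. assert (0 < INR k) by (apply lt_0_INR; lia). unfold dTV.
  rewrite (sum_split k m r).
  2: auto. 2:{ intros. unfold pth, unif. rewrite sig_out by auto. replace ((1 + a * 0) / INR k - 1 / INR k) with 0 by (field; lra). apply Rabs_R0. }
  rewrite (sumR_ext m _ (fun _ => 2 * (a / INR k))).
  rewrite sumR_const. assert (INR k = 2 * INR m + INR r) by (rewrite Hk, plus_INR, mult_INR; simpl; lra).
  assert (INR r <= 1) by (apply (le_INR r 1) in Hr; simpl in Hr; lra). assert (1 <= INR m) by (apply (le_INR 1 m) in Hm; simpl in Hm; lra).
  apply Rlt_gt. apply Rmult_lt_reg_r with (INR k); [lra|]. unfold Rdiv. field_simplify; [|lra]. subst a. nra.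
  intros i Hi. unfold pth, unif. rewrite sig_even, sig_odd by auto.
  replace ((1 + a * th bs i) / INR k - 1 / INR k) with ((a / INR k) * th bs i) by (field; lra).
  replace ((1 + a * - th bs i) / INR k - 1 / INR k) with (- ((a / INR k) * th bs i)) by (field; lra).
  assert (Rabs (th bs i) = 1) by (destruct (th_pm bs i) as [-> | ->]; unfold Rabs; destruct (Rcase_abs _); lra).
  rewrite Rabs_Ropp, Rabs_mult, Rabs_right, H0. lra.
  apply Rle_ge. unfold Rdiv. apply Rmult_le_pos; [lra|apply Rlt_le, Rinv_0_lt_compat; lra]. Qed.

Definition Dv k phi i z := Hd k (phi (2 * i)%nat) z - Hd k (phi (2 * i + 1)%nat) z.
Definition Vv k m phi bs z := sumR m (fun i => th bs i * Dv k phi i z).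
Definition c0 a eps k := a * beta eps / (INR k * Kr k).

Lemma out_pth k m r eps phi a bs z : k = (2 * m + r)%nat -> (1 <= k)%nat ->
  HR_out k eps phi (pth a k m bs) z = HR_out k eps phi (unif k) z + c0 a eps k * Vv k m phi bs z.
Proof. intros Hk Hk1. assert (0 < INR k) by (apply lt_0_INR; lia). pose proof (Kr_pos k).
  unfold HR_out. rewrite (sumR_ext _ _ (fun x => unif k x * HR_W k eps phi x z +
     (a / (INR k * Kr k)) * (sig m bs x * (1 + beta eps * Hd k (phi x) z)))).
  rewrite sumR_plus, sumR_scal, (sum_sig k m r) by auto. f_equal.
  rewrite (sumR_ext m _ (fun i => beta eps * (th bs i * Dv k phi i z))).
  rewrite sumR_scal. unfold c0, Vv. field; lra.
  intros; unfold Dv; lra.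
  intros. unfold pth, unif. rewrite HR_W_eq. field; lra. Qed.

Lemma D_orth k m r phi i l : valid_injection k phi -> k = (2 * m + r)%nat -> (i < m)%nat -> (l < m)%nat ->
  sumR (HR_K k) (fun z => Dv k phi i z * Dv k phi l z) = if Nat.eqb i l then 2 * Kr k else 0.
Proof. intros [Hv Hinj] Hk Hi Hl. unfold Dv, Hd.
  set (A := phi (2 * i)%nat). set (B := phi (2 * i + 1)%nat). set (C := phi (2 * l)%nat). set (E := phi (2 * l + 1)%nat).
  rewrite (sumR_ext _ _ (fun z => (hadamard (HR_m k) A z * hadamard (HR_m k) C z
     - hadamard (HR_m k) A z * hadamard (HR_m k) E z) - (hadamard (HR_m k) B z * hadamard (HR_m k) C z
     - hadamard (HR_m k) B z * hadamard (HR_m k) E z))) by (intros; ring).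
  rewrite !sumR_minus. unfold HR_K.
  destruct (Hv (2*i)%nat ltac:(lia)), (Hv (2*i+1)%nat ltac:(lia)), (Hv (2*l)%nat ltac:(lia)), (Hv (2*l+1)%nat ltac:(lia)).
  rewrite !had_orth by auto. unfold Kr, HR_K.
  assert (AE : A <> E) by (intro X; apply Hinj in X; lia).
  assert (BC : B <> C) by (intro X; apply Hinj in X; lia).
  destruct (Nat.eqb_spec A E); [contradiction|]. destruct (Nat.eqb_spec B C); [contradiction|].
  destruct (Nat.eqb_spec i l).
  - subst l. subst A B C E. rewrite !Nat.eqb_refl. lra.
  - destruct (Nat.eqb_spec A C). apply Hinj in e; lia. destruct (Nat.eqb_spec B E). apply Hinj in e; lia. lra. Qed.

Lemma quad Kn m (D : nat -> nat -> R) s x y :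
  (forall i l, (i < m)%nat -> (l < m)%nat -> sumR Kn (fun z => D i z * D l z) = if Nat.eqb i l then s else 0) ->
  sumR Kn (fun z => sumR m (fun i => x i * D i z) * sumR m (fun l => y l * D l z)) = s * sumR m (fun i => x i * y i).
Proof. intros Ho.
  rewrite (sumR_ext Kn _ (fun z => sumR m (fun i => sumR m (fun l => x i * D i z * (y l * D l z))))).
  2:{ intros; apply sumR_mul. }
  rewrite <- sumR_swap. rewrite <- sumR_scal. apply sumR_ext; intros i Hi.
  rewrite <- sumR_swap. rewrite (sumR_ext m _ (fun l => if Nat.eqb i l then s * (x i * y i) else 0)).
  apply (sumR_kron m i (fun _ => s * (x i * y i))); auto.
  intros l Hl. rewrite (sumR_ext Kn _ (fun z => (x i * y l) * (D i z * D l z))) by (intros; ring).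
  rewrite sumR_scal, Ho by auto. destruct (Nat.eqb_spec i l); [subst; ring| ring]. Qed.

Lemma bessel Kn m (D : nat -> nat -> R) s f : 0 < s ->
  (forall i l, (i < m)%nat -> (l < m)%nat -> sumR Kn (fun z => D i z * D l z) = if Nat.eqb i l then s else 0) ->
  sumR m (fun i => (sumR Kn (fun z => D i z * f z)) ^ 2) <= s * sumR Kn (fun z => f z ^ 2).
Proof. intros Hs Ho. set (al := fun i => sumR Kn (fun z => D i z * f z)).
  set (g := fun z => sumR m (fun i => (al i / s) * D i z)).
  assert (H0 : 0 <= sumR Kn (fun z => (f z - g z) ^ 2)) by (apply sumR_nonneg; intros; apply pow2_ge_0).
  rewrite (sumR_ext Kn _ (fun z => f z ^ 2 + (-2) * (f z * g z) + g z * g z)) in H0 by (intros; ring).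
  rewrite !sumR_plus, sumR_scal in H0.
  assert (E1 : sumR Kn (fun z => f z * g z) = sumR m (fun i => (al i / s) * al i)).
  { unfold g. rewrite (sumR_ext Kn _ (fun z => sumR m (fun i => (al i / s) * (D i z * f z)))).
    rewrite sumR_swap. apply sumR_ext; intros. rewrite sumR_scal. auto.
    intros. rewrite <- sumR_scal. apply sumR_ext; intros; ring. }
  assert (E2 : sumR Kn (fun z => g z * g z) = s * sumR m (fun i => (al i / s) * (al i / s))).
  { unfold g. apply quad; auto. }
  rewrite E1, E2 in H0.
  rewrite (sumR_ext m (fun i => al i / s * al i) (fun i => / s * (al i ^ 2))) in H0 by (intros; field; lra).
  rewrite (sumR_ext m (fun i => al i / s * (al i / s)) (fun i => / s * / s * (al i ^ 2))) in H0 by (intros; field; lra).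
  rewrite !sumR_scal in H0. fold al.
  assert (0 <= sumR m (fun i => al i ^ 2)) by (apply sumR_nonneg; intros; apply pow2_ge_0).
  apply Rmult_le_reg_l with (/ s). apply Rinv_0_lt_compat; lra.
  replace (/ s * (s * sumR Kn (fun z => f z ^ 2))) with (sumR Kn (fun z => f z ^ 2)) by (field; lra).
  replace (s * (/ s * / s * sumR m (fun i => al i ^ 2))) with (/ s * sumR m (fun i => al i ^ 2)) in H0 by (field; lra).
  change (/ s * sumR m (fun i => al i ^ 2) <= sumR Kn (fun z => f z ^ 2)). lra. Qed.

Fixpoint prodF (m : nat) (c : nat -> R) : R :=
  match m with O => 1 | S m' => (1 - c 0%nat ^ 2) * prodF m' (fun i => c (S i)) end.

Lemma prodF_pos m c : (forall i, (i < m)%nat -> c i ^ 2 < 1) -> 0 < prodF m c.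
Proof. revert c; induction m; simpl; intros c H; [lra|]. apply Rmult_lt_0_compat.
  assert (c 0%nat ^ 2 < 1) by (apply H; lia). simpl in H0. lra. apply IHm. intros; apply H; lia. Qed.

Lemma prodF_lower m c : (forall i, (i < m)%nat -> c i ^ 2 <= 1) -> 1 - sumR m (fun i => c i ^ 2) <= prodF m c.
Proof. revert c; induction m; intros c H; [simpl; lra|]. rewrite sumR_shift. cbn [prodF].
  assert (IH := IHm (fun i => c (S i)) ltac:(intros; apply H; lia)).
  assert (H0 : c 0%nat ^ 2 <= 1) by (apply H; lia).
  assert (0 <= sumR m (fun i => c (S i) ^ 2)) by (apply sumR_nonneg; intros; apply pow2_ge_0).
  assert (0 <= c 0%nat ^ 2) by apply pow2_ge_0.
  assert ((1 - c 0%nat ^ 2) * (1 - sumR m (fun i => c (S i) ^ 2)) <= (1 - c 0%nat ^ 2) * prodF m (fun i => c (S i)))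
    by (apply Rmult_le_compat_l; lra). nra. Qed.

Lemma cosh_bound x : x ^ 2 < 1 -> exp x + exp (- x) <= 2 / (1 - x ^ 2).
Proof. intros H. assert (E : exp x * exp (- x) = 1) by (rewrite <- exp_plus, <- exp_0; f_equal; lra).
  pose proof (exp_ineq1_le x). pose proof (exp_ineq1_le (- x)). pose proof (exp_pos x). pose proof (exp_pos (-x)).
  assert (-1 < x < 1) by nra.
  assert (exp x * (1 - x) <= 1) by nra. assert (exp (-x) * (1 + x) <= 1) by nra.
  assert (exp x <= / (1 - x)). { apply Rmult_le_reg_r with (1 - x); [lra|]. rewrite Rinv_l by lra. lra. }
  assert (exp (-x) <= / (1 + x)). { apply Rmult_le_reg_r with (1 + x); [lra|]. rewrite Rinv_l by lra. lra. }
  replace (2 / (1 - x ^ 2)) with (/ (1 - x) + / (1 + x)) by (field; lra). lra. Qed.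

Lemma avg_exp m c : (forall i, (i < m)%nat -> c i ^ 2 < 1) ->
  seqsum m 2 (fun bs => exp (sumR m (fun i => th bs i * c i))) <= 2 ^ m / prodF m c.
Proof. revert c; induction m; intros c H.
  simpl. rewrite exp_0. lra.
  cbn [seqsum].
  assert (Hs : forall z, seqsum m 2 (fun zs => exp (sumR (S m) (fun i => th (z :: zs) i * c i))) =
     exp (sg z * c 0%nat) * seqsum m 2 (fun zs => exp (sumR m (fun i => th zs i * c (S i))))).
  { intros z. rewrite <- seqsum_scal. apply seqsum_ext; intros zs. rewrite sumR_shift, exp_plus. reflexivity. }
  assert (S2 : forall g, sumR 2 g = g 0%nat + g 1%nat) by (intros; simpl; lra). rewrite S2. rewrite !Hs. unfold sg; simpl Nat.eqb.
  assert (IH := IHm (fun i => c (S i)) ltac:(intros; apply H; lia)).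
  assert (Hc : c 0%nat ^ 2 < 1) by (apply H; lia).
  assert (Hp : 0 < prodF m (fun i => c (S i))) by (apply prodF_pos; intros; apply H; lia).
  assert (0 <= seqsum m 2 (fun zs => exp (sumR m (fun i => th zs i * c (S i))))) by (apply seqsum_nonneg; intros; apply Rlt_le, exp_pos).
  pose proof (cosh_bound _ Hc).
  replace (-1 * c 0%nat) with (- c 0%nat) by ring. rewrite Rmult_1_l.
  cbn [prodF]. replace (2 ^ S m / ((1 - c 0%nat ^ 2) * prodF m (fun i => c (S i)))) with
    ((2 / (1 - c 0%nat ^ 2)) * (2 ^ m / prodF m (fun i => c (S i)))) by (simpl; field; split; lra).
  assert (0 <= 2 ^ m / prodF m (fun i => c (S i))).
  { unfold Rdiv. apply Rmult_le_pos. apply pow_le; lra. apply Rlt_le, Rinv_0_lt_compat; lra. }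
  pose proof (exp_pos (c 0%nat)). pose proof (exp_pos (- c 0%nat)).
  set (S0 := seqsum m 2 (fun zs => exp (sumR m (fun i => th zs i * c (S i))))) in *.
  set (B := 2 ^ m / prodF m (fun i => c (S i))) in *.
  assert (exp (c 0%nat) * S0 <= exp (c 0%nat) * B) by (apply Rmult_le_compat_l; lra).
  assert (exp (- c 0%nat) * S0 <= exp (- c 0%nat) * B) by (apply Rmult_le_compat_l; lra).
  assert ((exp (c 0%nat) + exp (- c 0%nat)) * B <= 2 / (1 - c 0%nat ^ 2) * B) by (apply Rmult_le_compat_r; lra).
  replace (-1 * c 0%nat) with (- c 0%nat) by ring. lra. Qed.

Lemma W_nonneg k eps phi x z : 0 < eps -> eps <= 1 -> 0 <= HR_W k eps phi x z.
Proof. intros. rewrite HR_W_eq. destruct (beta_bounds eps H H0) as [B1 [B2 B3]]. pose proof (Kr_pos k).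
  apply Rmult_le_pos; [|apply Rlt_le, Rinv_0_lt_compat; lra]. destruct (Hd_pm k (phi x) z) as [-> | ->]; lra. Qed.

Lemma unif_sum k : (1 <= k)%nat -> sumR k (unif k) = 1.
Proof. intros. unfold unif. rewrite sumR_const. assert (0 < INR k) by (apply lt_0_INR; lia). field; lra. Qed.

Lemma pointwise_ct Q M T : 0 < Q -> 0 <= T <= 1 -> (Q - M) * T <= 3 * ((Q - M) ^ 2 / Q) + Q / 12.
Proof. intros HQ HT. set (x := Q - M).
  apply Rmult_le_reg_r with Q; [lra|].
  replace ((3 * (x ^ 2 / Q) + Q / 12) * Q) with (3 * x ^ 2 + Q * Q / 12) by (field; lra).
  assert (0 <= Q * T) by (apply Rmult_le_pos; lra). assert (Q * T <= Q) by (assert (0 <= Q * (1 - T)) by (apply Rmult_le_pos; lra); lra).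
  assert (Q * T * (Q * T) <= Q * Q) by (apply Rmult_le_compat; lra).
  assert (0 <= 3 * (x - Q * T / 6) ^ 2) by (apply Rmult_le_pos; [lra|apply pow2_ge_0]). nra. Qed.

Lemma exp_pow_n x n : exp x ^ n = exp (INR n * x).
Proof. induction n. simpl. rewrite Rmult_0_l, exp_0; auto. rewrite S_INR. simpl. rewrite IHn, <- exp_plus. f_equal; ring. Qed.

Lemma sumR_scalr n f c : sumR n f * c = sumR n (fun i => f i * c).
Proof. rewrite Rmult_comm, <- sumR_scal. apply sumR_ext; intros; ring. Qed.

Lemma core k m r gamma eps phi n T :
  k = (2 * m + r)%nat -> (r <= 1)%nat -> (1 <= m)%nat ->
  0 < gamma -> gamma <= 1/4 -> 0 < eps -> eps <= 1 ->
  valid_injection k phi -> (forall zs, 0 <= T zs <= 1) ->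
  accept_prob n k eps phi (unif k) T >= 2/3 ->
  (forall p, is_dist k p -> dTV k p (unif k) > gamma -> 1 - accept_prob n k eps phi p T >= 2/3) ->
  1/20 < INR n ^ 2 * (4 * c0 (4 * gamma) eps k ^ 4 * Kr k ^ 4 * INR m / (1 - beta eps) ^ 2).
Proof.
  intros Hk Hr Hm Hg1 Hg2 He1 He2 Hv HT Hacc Hrej.
  assert (Hk1 : (1 <= k)%nat) by lia.
  destruct (beta_bounds eps He1 He2) as [B1 [B2 B3]].
  pose proof (Kr_pos k) as HK.
  set (a := 4 * gamma).
  set (Kn := HR_K k).
  set (qu := HR_out k eps phi (unif k)).
  set (qb := fun bs => HR_out k eps phi (pth a k m bs)).
  set (N := INR 2 ^ m).
  assert (HN : 0 < N) by (unfold N; apply pow_lt; simpl; lra).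
  set (Lb := 4 * c0 a eps k ^ 4 * Kr k ^ 4 * INR m / (1 - beta eps) ^ 2).
  assert (Hc0 : 0 < c0 a eps k).
  { unfold c0. apply Rdiv_lt_0_compat. unfold a; nra. apply Rmult_lt_0_compat; auto. apply lt_0_INR; lia. }
  assert (HLb : 0 <= Lb).
  { unfold Lb, Rdiv. apply Rmult_le_pos; [apply Rmult_le_pos; [apply Rmult_le_pos|apply pos_INR]|].
    apply Rmult_le_pos; [lra|apply pow_le; lra]. apply pow_le; lra.
    apply Rlt_le, Rinv_0_lt_compat, pow_lt; lra. }
  destruct (Rlt_or_le (1/20) (INR n ^ 2 * Lb)) as [Hc|Hc]; [exact Hc|exfalso].
  assert (Hqu1 : sumR Kn qu = 1) by (unfold qu, Kn; rewrite out_sum by auto; apply unif_sum; auto).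
  assert (Hdist : forall bs, is_dist k (pth a k m bs)) by (intros; apply (pth_dist a k m r); auto; unfold a; lra).
  assert (Hqb1 : forall bs, sumR Kn (qb bs) = 1) by (intros; unfold qb, Kn; rewrite out_sum by auto; apply Hdist).
  assert (Hqupos : forall z, 0 < qu z).
  { intros. eapply Rlt_le_trans; [|apply qu_lower; auto]. apply Rdiv_lt_0_compat; lra. }
  assert (Hqulow : forall z, (1 - beta eps) / Kr k <= qu z) by (intros; apply qu_lower; auto).
  assert (Hqbnn : forall bs z, 0 <= qb bs z).
  { intros. unfold qb, HR_out. apply sumR_nonneg; intros. apply Rmult_le_pos. apply (proj1 (Hdist bs)); auto. apply W_nonneg; auto. }
  assert (Hqbeq : forall bs z, qb bs z = qu z + c0 a eps k * Vv k m phi bs z) by (intros; unfold qb, qu; apply (out_pth k m r); auto).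
  assert (Hrej' : forall bs, seqsum n Kn (fun zs => prodR (qb bs) zs * T zs) <= 1/3).
  { intros. assert (X := Hrej _ (Hdist bs) ltac:(apply (pth_far a gamma k m r); auto)). unfold accept_prob in X.
    change (seqsum n (HR_K k) (fun zs => prodR (HR_out k eps phi (pth a k m bs)) zs * T zs) <= 1/3). lra. }
  unfold accept_prob in Hacc. fold Kn qu in Hacc.
  set (Q := fun zs => prodR qu zs).
  set (P := fun bs zs => prodR (qb bs) zs).
  set (M := fun zs => / N * seqsum m 2 (fun bs => P bs zs)).
  assert (HQpos : forall zs, 0 < Q zs) by (intros; apply prodR_pos; auto).
  assert (HQ1 : seqsum n Kn Q = 1) by (unfold Q; rewrite seqsum_prod, Hqu1; apply pow1).
  assert (StepA : 1/3 <= seqsum n Kn (fun zs => (Q zs - M zs) * T zs)).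
  { rewrite (seqsum_ext _ _ _ (fun zs => Q zs * T zs + (- / N) * seqsum m 2 (fun bs => P bs zs * T zs))).
    2:{ intros zs. rewrite (seqsum_ext m 2 (fun bs => P bs zs * T zs) (fun bs => T zs * P bs zs)) by (intros; ring).
        rewrite seqsum_scal. unfold M. ring. }
    rewrite seqsum_plus, seqsum_scal, seqsum_swap.
    assert (seqsum m 2 (fun bs => seqsum n Kn (fun zs => P bs zs * T zs)) <= seqsum m 2 (fun _ => 1/3)).
    { apply seqsum_le; intros; apply Hrej'. }
    rewrite seqsum_const in H. fold N in H.
    assert (/ N * seqsum m 2 (fun bs => seqsum n Kn (fun zs => P bs zs * T zs)) <= /N * (N * (1/3))).
    { apply Rmult_le_compat_l; [apply Rlt_le, Rinv_0_lt_compat; lra| lra]. }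
    replace (/ N * (N * (1/3))) with (1/3) in H0 by (field; lra).
    unfold Q at 1. lra. }
  set (X := seqsum n Kn (fun zs => (Q zs - M zs) ^ 2 / Q zs)).
  assert (StepB : 1/12 <= X).
  { assert (seqsum n Kn (fun zs => (Q zs - M zs) * T zs) <= seqsum n Kn (fun zs => 3 * ((Q zs - M zs) ^ 2 / Q zs) + Q zs / 12)).
    { apply seqsum_le; intros. apply pointwise_ct; auto. }
    rewrite seqsum_plus, seqsum_scal in H.
    rewrite (seqsum_ext _ _ (fun zs => Q zs / 12) (fun zs => /12 * Q zs)) in H by (intros; field).
    rewrite seqsum_scal, HQ1 in H. fold X in H. lra. }

  assert (HM : forall zs, Q zs - M zs = / N * seqsum m 2 (fun b => Q zs - P b zs)).
  { intros. rewrite seqsum_minus, seqsum_const. fold N. unfold M. field; lra. }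
  set (A := fun b b' => sumR Kn (fun z => qb b z * qb b' z / qu z)).
  assert (StepD : forall b b', seqsum n Kn (fun zs => (Q zs - P b zs) * (Q zs - P b' zs) / Q zs) = A b b' ^ n - 1).
  { intros. rewrite (seqsum_ext _ _ _ (fun zs => Q zs - P b zs - P b' zs + P b zs * P b' zs / Q zs)).
    2:{ intros zs. specialize (HQpos zs). field; lra. }
    rewrite seqsum_plus, !seqsum_minus.
    rewrite (seqsum_ext _ _ (fun zs => P b zs * P b' zs / Q zs) (prodR (fun z => qb b z * qb b' z / qu z))).
    2:{ intros zs. unfold P, Q. apply prodR_quot; auto. }
    unfold P, Q. rewrite !seqsum_prod, !Hqb1, Hqu1, pow1. unfold A. ring. }
  assert (StepC : X = / N ^ 2 * seqsum m 2 (fun b => seqsum m 2 (fun b' => A b b' ^ n - 1))).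
  { unfold X. rewrite (seqsum_ext n Kn _ (fun zs => / N ^ 2 * seqsum m 2 (fun b => seqsum m 2 (fun b' => (Q zs - P b zs) * (Q zs - P b' zs) / Q zs)))).
    rewrite seqsum_scal, seqsum_swap. f_equal. apply seqsum_ext; intros b. rewrite seqsum_swap. apply seqsum_ext; intros b'. apply StepD.
    intros zs. rewrite HM. set (S := seqsum m 2 (fun b => Q zs - P b zs)).
    pose proof (HQpos zs).
    replace ((/ N * S) ^ 2 / Q zs) with (/ N ^ 2 * (/ Q zs * (S * S))) by (field; lra).
    f_equal. unfold S. rewrite seqsum_mul, <- seqsum_scal. apply seqsum_ext; intros b. rewrite <- seqsum_scal.
    apply seqsum_ext; intros b'. field; lra. }
  set (bc := fun b i => c0 a eps k ^ 2 * sumR Kn (fun z => Dv k phi i z * (Vv k m phi b z / qu z))).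
  assert (HV0 : forall b, sumR Kn (fun z => c0 a eps k * Vv k m phi b z) = 0).
  { intros. pose proof (Hqb1 b) as H. rewrite (sumR_ext _ _ (fun z => qu z + c0 a eps k * Vv k m phi b z)) in H by (intros; apply Hqbeq).
    rewrite sumR_plus, Hqu1 in H. lra. }
  assert (StepE : forall b b', A b b' = 1 + sumR m (fun i => th b' i * bc b i)).
  { intros. unfold A. rewrite (sumR_ext _ _ (fun z => qu z + c0 a eps k * Vv k m phi b z + c0 a eps k * Vv k m phi b' z
        + c0 a eps k ^ 2 * (Vv k m phi b' z * (Vv k m phi b z / qu z)))).
    2:{ intros. rewrite !Hqbeq. specialize (Hqupos i). field; lra. }
    rewrite !sumR_plus, Hqu1, !HV0, sumR_scal.
    assert (Hsw : forall f, sumR Kn (fun z => Vv k m phi b' z * f z) = sumR m (fun i => th b' i * sumR Kn (fun z => Dv k phi i z * f z))).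
    { intros f. unfold Vv. rewrite (sumR_ext Kn _ (fun z => sumR m (fun i => th b' i * (Dv k phi i z * f z)))).
      rewrite sumR_swap. apply sumR_ext; intros. apply sumR_scal. intros. rewrite sumR_scalr. apply sumR_ext; intros; ring. }
    rewrite (Hsw (fun z => Vv k m phi b z / qu z)). rewrite <- sumR_scal. unfold bc.
    assert (E : sumR m (fun i => c0 a eps k ^ 2 * (th b' i * sumR Kn (fun z => Dv k phi i z * (Vv k m phi b z / qu z))))
      = sumR m (fun i => th b' i * (c0 a eps k ^ 2 * sumR Kn (fun z => Dv k phi i z * (Vv k m phi b z / qu z))))) by (apply sumR_ext; intros; ring).
    rewrite E. ring. }
  assert (StepG : forall b, sumR m (fun i => bc b i ^ 2) <= Lb).
  { intros. unfold bc. rewrite (sumR_ext m _ (fun i => c0 a eps k ^ 4 * (sumR Kn (fun z => Dv k phi i z * (Vv k m phi b z / qu z))) ^ 2)) by (intros; ring).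
    rewrite sumR_scal.
    assert (Bs := bessel Kn m (Dv k phi) (2 * Kr k) (fun z => Vv k m phi b z / qu z) ltac:(lra) (fun i l Hi Hl => D_orth k m r phi i l Hv Hk Hi Hl)).
    assert (Hf : sumR Kn (fun z => (Vv k m phi b z / qu z) ^ 2) <= (Kr k / (1 - beta eps)) ^ 2 * sumR Kn (fun z => Vv k m phi b z ^ 2)).
    { rewrite <- sumR_scal. apply sumR_le; intros z _.
      assert (H1 : 0 < (1 - beta eps) / Kr k) by (apply Rdiv_lt_0_compat; lra).
      assert (H2 : / qu z <= / ((1 - beta eps) / Kr k)) by (apply Rinv_le_contravar; auto).
      replace (/ ((1 - beta eps) / Kr k)) with (Kr k / (1 - beta eps)) in H2 by (field; lra).
      assert (0 < / qu z) by (apply Rinv_0_lt_compat; auto).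
      assert (H3 : (/ qu z) ^ 2 <= (Kr k / (1 - beta eps)) ^ 2) by (apply pow_incr; lra).
      replace ((Vv k m phi b z / qu z) ^ 2) with ((/ qu z) ^ 2 * Vv k m phi b z ^ 2) by (unfold Rdiv; ring).
      rewrite Rmult_comm. rewrite (Rmult_comm ((Kr k / (1 - beta eps)) ^ 2)). apply Rmult_le_compat_l; auto. apply pow2_ge_0. }
    assert (HV2 : sumR Kn (fun z => Vv k m phi b z ^ 2) = 2 * Kr k * INR m).
    { unfold Vv. rewrite (sumR_ext Kn _ (fun z => sumR m (fun i => th b i * Dv k phi i z) * sumR m (fun l => th b l * Dv k phi l z))) by (intros; ring).
      rewrite (quad Kn m (Dv k phi) (2 * Kr k) (th b) (th b)) by (intros; apply (D_orth k m r); auto).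
      rewrite (sumR_ext m _ (fun _ => 1)) by (intros; destruct (th_pm b i) as [-> | ->]; ring). rewrite sumR_const; ring. }
    rewrite HV2 in Hf.
    assert (0 <= c0 a eps k ^ 4) by (apply pow_le; lra).
    apply Rle_trans with (c0 a eps k ^ 4 * (2 * Kr k * ((Kr k / (1 - beta eps)) ^ 2 * (2 * Kr k * INR m)))).
    apply Rmult_le_compat_l; auto. apply Rle_trans with (2 * Kr k * sumR Kn (fun z => (Vv k m phi b z / qu z) ^ 2)); auto.
    apply Rmult_le_compat_l; lra.
    unfold Lb. right. field. lra. }
  assert (Hsmall : INR n ^ 2 * Lb <= 1/20) by exact Hc.
  assert (HN2 : N = 2 ^ m) by (unfold N; f_equal; simpl; lra).
  assert (StepH : forall b, seqsum m 2 (fun b' => A b b' ^ n) <= N / (1 - INR n ^ 2 * Lb)).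
  { intros. set (c := fun i => INR n * bc b i).
    assert (Hsc : sumR m (fun i => c i ^ 2) = INR n ^ 2 * sumR m (fun i => bc b i ^ 2)).
    { rewrite <- sumR_scal. apply sumR_ext; intros; unfold c; ring. }
    assert (Hsc2 : sumR m (fun i => c i ^ 2) <= INR n ^ 2 * Lb).
    { rewrite Hsc. apply Rmult_le_compat_l; [apply pow2_ge_0| apply StepG]. }
    assert (Hci : forall i, (i < m)%nat -> c i ^ 2 <= INR n ^ 2 * Lb).
    { intros. eapply Rle_trans; [|apply Hsc2]. apply (sumR_ge_term m (fun i => c i ^ 2)); auto. intros; apply pow2_ge_0. }
    eapply Rle_trans. apply seqsum_le with (G := fun b' => exp (sumR m (fun i => th b' i * c i))).
    { intros b'. assert (HA : 0 <= A b b').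
      { unfold A. apply sumR_nonneg; intros. unfold Rdiv. apply Rmult_le_pos. apply Rmult_le_pos; auto.
        apply Rlt_le, Rinv_0_lt_compat; auto. }
      pose proof (exp_ineq1_le (A b b' - 1)).
      eapply Rle_trans. apply pow_incr. split; [exact HA|]. replace (A b b') with (1 + (A b b' - 1)) at 1 by ring. exact H.
      rewrite exp_pow_n. right. f_equal. rewrite StepE. replace (1 + sumR m (fun i => th b' i * bc b i) - 1) with (sumR m (fun i => th b' i * bc b i)) by ring.
      rewrite <- sumR_scal. apply sumR_ext; intros. unfold c; ring. }
    eapply Rle_trans. apply avg_exp. intros; specialize (Hci i H); lra.
    rewrite <- HN2.
    assert (Hp : 1 - INR n ^ 2 * Lb <= prodF m c).
    { eapply Rle_trans; [|apply prodF_lower]. lra. intros; specialize (Hci i H); lra. }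
    unfold Rdiv. apply Rmult_le_compat_l; [lra|]. apply Rinv_le_contravar; lra. }
  assert (StepI : X <= / (1 - INR n ^ 2 * Lb) - 1).
  { rewrite StepC. 
    assert (H1 : seqsum m 2 (fun b => seqsum m 2 (fun b' => A b b' ^ n - 1)) <= seqsum m 2 (fun _ => N / (1 - INR n ^ 2 * Lb) - N)).
    { apply seqsum_le; intros b. rewrite seqsum_minus, seqsum_const. fold N. specialize (StepH b). lra. }
    rewrite seqsum_const in H1. fold N in H1.
    assert (H2 : / N ^ 2 * seqsum m 2 (fun b => seqsum m 2 (fun b' => A b b' ^ n - 1)) <= / N ^ 2 * (N * (N / (1 - INR n ^ 2 * Lb) - N))).
    { apply Rmult_le_compat_l; [apply Rlt_le, Rinv_0_lt_compat, pow_lt; lra|lra]. }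
    replace (/ N ^ 2 * (N * (N / (1 - INR n ^ 2 * Lb) - N))) with (/ (1 - INR n ^ 2 * Lb) - 1) in H2 by (field; lra).
    exact H2. }
  assert (/ (1 - INR n ^ 2 * Lb) <= 20/19).
  { replace (20/19) with (/ (19/20)) by (field). apply Rinv_le_contravar; lra. }
  lra.
Qed.

Lemma Rpower_sq k : 0 < k -> Rpower k (3/2) * Rpower k (3/2) = k ^ 3.
Proof. intros. rewrite <- Rpower_plus. replace (3/2 + 3/2) with (INR 3) by (simpl; lra). apply Rpower_pow; auto. Qed.

Theorem theorem5p3 :
  exists c : R, 0 < c /\
  forall (k : nat) (gamma eps : R) (phi : nat -> nat) (n : nat) (T : list nat -> R),
    (2 <= k)%nat ->
    0 < gamma -> gamma <= 1/4 ->
    0 < eps -> eps <= 1 ->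
    valid_injection k phi ->
    (forall zs, 0 <= T zs <= 1) ->
    accept_prob n k eps phi (unif k) T >= 2/3 ->
    (forall p, is_dist k p -> dTV k p (unif k) > gamma ->
       1 - accept_prob n k eps phi p T >= 2/3) ->
    INR n >= c * Rpower (INR k) (3/2) / (gamma ^ 2 * eps ^ 2).
Proof.
  exists (1/1000). split; [lra|].
  intros k gamma eps phi n T Hk2 Hg1 Hg2 He1 He2 Hv HT Hacc Hrej.
  set (m := (k / 2)%nat). set (r := (k mod 2)%nat).
  assert (Hkm : k = (2 * m + r)%nat) by (unfold m, r; apply Nat.div_mod; lia).
  assert (Hr : (r < 2)%nat) by (unfold r; apply Nat.mod_upper_bound; lia).
  assert (Hm : (1 <= m)%nat) by lia.
  assert (Hc := core k m r gamma eps phi n T Hkm ltac:(lia) Hm Hg1 Hg2 He1 He2 Hv HT Hacc Hrej).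
  destruct (beta_bounds eps He1 He2) as [B1 [B2 B3]].
  pose proof (Kr_pos k) as HK.
  assert (Hk0 : 0 < INR k) by (apply lt_0_INR; lia).
  assert (HmK : 2 * INR m <= INR k).
  { rewrite Hkm, plus_INR, mult_INR. simpl. pose proof (pos_INR r). lra. }
  assert (Hm1 : 1 <= INR m) by (apply (le_INR 1 m) in Hm; simpl in Hm; lra).
  set (x := 4 * gamma * beta eps).
  assert (Hx : 0 < x <= 6 * (gamma * eps)) by (unfold x; split; nra).
  assert (ELb : 4 * c0 (4 * gamma) eps k ^ 4 * Kr k ^ 4 * INR m / (1 - beta eps) ^ 2
             = 4 * x ^ 4 * INR m / (INR k ^ 4 * (1 - beta eps) ^ 2)).
  { unfold c0, x. field. lra. }
  rewrite ELb in Hc.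
  set (Rk := Rpower (INR k) (3/2)).
  assert (HRk : 0 < Rk) by (unfold Rk, Rpower; apply exp_pos).
  assert (HRk2 : Rk * Rk = INR k ^ 3) by (apply Rpower_sq; auto).
  set (Y := INR n * (gamma * eps) ^ 2).
  assert (HY0 : 0 <= Y) by (unfold Y; apply Rmult_le_pos; [apply pos_INR|apply pow2_ge_0]).
  assert (Hge : 0 < gamma * eps) by nra.
  destruct (Rle_or_lt (1/1000 * Rk / (gamma ^ 2 * eps ^ 2)) (INR n)) as [H|H]; [lra|exfalso].
  assert (HY : Y < 1/1000 * Rk).
  { unfold Y. apply Rmult_lt_reg_r with (/ (gamma * eps) ^ 2). apply Rinv_0_lt_compat, pow_lt; auto.
    replace (INR n * (gamma * eps) ^ 2 * / (gamma * eps) ^ 2) with (INR n) by (field; lra).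
    replace (1 / 1000 * Rk * / (gamma * eps) ^ 2) with (1/1000 * Rk / (gamma ^ 2 * eps ^ 2)) by (field; lra). exact H. }
  assert (HY2 : Y * Y < 1/1000000 * INR k ^ 3).
  { rewrite <- HRk2. assert (Y * Y <= Y * (1/1000 * Rk)) by (apply Rmult_le_compat_l; lra).
    assert (Y * (1/1000 * Rk) < (1/1000 * Rk) * (1/1000 * Rk)) by (apply Rmult_lt_compat_r; lra). nra. }
  assert (Hx4 : x ^ 4 <= 1296 * (gamma * eps) ^ 4).
  { replace (1296 * (gamma * eps) ^ 4) with ((6 * (gamma * eps)) ^ 4) by ring. apply pow_incr. lra. }
  assert (Hb : / (1 - beta eps) ^ 2 <= 25 / 4).
  { replace (25/4) with (/ ((2/5) ^ 2)) by field. apply Rinv_le_contravar. apply pow_lt; lra. apply pow_incr; lra. }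
  assert (Hn0 : 0 <= INR n ^ 2) by apply pow2_ge_0.
  assert (HL : INR n ^ 2 * (4 * x ^ 4 * INR m / (INR k ^ 4 * (1 - beta eps) ^ 2))
               <= INR n ^ 2 * (4 * (1296 * (gamma * eps) ^ 4) * INR m * (25/4) / INR k ^ 4)).
  { apply Rmult_le_compat_l; auto.
    replace (4 * x ^ 4 * INR m / (INR k ^ 4 * (1 - beta eps) ^ 2)) with ((4 * INR m / INR k ^ 4) * (x ^ 4 * / (1 - beta eps) ^ 2)) by (field; split; lra).
    replace (4 * (1296 * (gamma * eps) ^ 4) * INR m * (25 / 4) / INR k ^ 4) with ((4 * INR m / INR k ^ 4) * (1296 * (gamma * eps) ^ 4 * (25/4))) by (field; lra).
    assert (0 <= 4 * INR m / INR k ^ 4).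
    { unfold Rdiv. apply Rmult_le_pos; [lra|]. apply Rlt_le, Rinv_0_lt_compat, pow_lt; lra. }
    apply Rmult_le_compat_l; auto. apply Rmult_le_compat; auto. apply pow_le; lra.
    apply Rlt_le, Rinv_0_lt_compat, pow_lt; lra. }
  assert (HL2 : INR n ^ 2 * (4 * (1296 * (gamma * eps) ^ 4) * INR m * (25/4) / INR k ^ 4) <= 16200 * (Y * Y) / INR k ^ 3).
  { unfold Y. apply Rmult_le_reg_r with (INR k ^ 4). apply pow_lt; lra.
    replace (INR n ^ 2 * (4 * (1296 * (gamma * eps) ^ 4) * INR m * (25/4) / INR k ^ 4) * INR k ^ 4)
      with (32400 * (INR n ^ 2 * (gamma * eps) ^ 4) * INR m) by (field; lra).
    replace (16200 * (INR n * (gamma * eps) ^ 2 * (INR n * (gamma * eps) ^ 2)) / INR k ^ 3 * INR k ^ 4)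
      with (16200 * (INR n ^ 2 * (gamma * eps) ^ 4) * INR k) by (field; lra).
    assert (0 <= INR n ^ 2 * (gamma * eps) ^ 4) by (apply Rmult_le_pos; [auto|apply pow_le; lra]). nra. }
  assert (HL3 : 16200 * (Y * Y) / INR k ^ 3 < 16200 / 1000000).
  { apply Rmult_lt_reg_r with (INR k ^ 3). apply pow_lt; lra.
    replace (16200 * (Y * Y) / INR k ^ 3 * INR k ^ 3) with (16200 * (Y * Y)) by (field; lra). nra. }
  lra.
Qed.
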